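(* Let $(Y,X,A)$ be jointly distributed with $Y\in\{0,1\}$, $A\in\{0,1\}$ and $X$ taking values in an arbitrary space, and let $R=r^*(X,A)$ with $r^*(x,a)=\mathbb{E}[Y\mid X=x,A=a]$ be the Bayes optimal regressor. Let $\ell:\{0,1\}^2\to\mathbb{R}$ be any loss function and let $C$ be any oblivious property of predictors. Then there exists a predictor $Y^*=Y^*(R,A)$ such that: (1) $Y^*$ is an optimal predictor satisfying $C$, that is, $Y^*$ satisfies $C$ and $\mathbb{E}\,\ell(Y^*,Y)\le\mathbb{E}\,\ell(\widehat{Y},Y)$ for every (possibly randomized) predictor $\widehat{Y}=\widehat{Y}(X,A)\in\{0,1\}$ satisfying $C$; (2) $Y^*$ is derived from $(R,A)$.
   Context: A property of a predictor $\widehat{Y}$ is oblivious if whether it holds depends only on the joint distribution of $(Y,A,\widehat{Y})$. A predictor is derived from $(R,A)$ if it is a possibly randomized function of $(R,A)$ alone (with randomness independent of everything else); in particular it is independent of $X$ conditional on $(R,A)$. *)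

(* Defs.v *)
From HB Require Import structures.
From mathcomp Require Import all_boot all_order all_algebra.
From mathcomp Require Import all_classical all_reals all_analysis.
Set Implicit Arguments. Unset Strict Implicit. Unset Printing Implicit Defensive.
Import Order.TTheory GRing.Theory Num.Theory.
Local Open Scope classical_set_scope.
Local Open Scope ring_scope.

(* r is (a version of) the Bayes optimal regressor E[Y | X, A]: a measurable
   function of (x,a) such that r(X,A) is integrable and, for every set in
   sigma(X,A) = {(X,A)^-1 G | G measurable in T * bool},
   E[Y 1_{(X,A) in G}] = E[r(X,A) 1_{(X,A) in G}]. *)
Definition is_bayes_regressor (R : realType) (d : measure_display)
  (Omega : measurableType d) (P : probability Omega R)
  (d' : measure_display) (T : measurableType d')
  (Y A : Omega -> bool) (X : Omega -> T) (r : T * bool -> R) : Prop :=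
  measurable_fun setT r /\
  P.-integrable setT (fun w => (r (X w, A w))%:E) /\
  forall G : set (T * bool), measurable G ->
    (\int[P]_(w in (fun w => (X w, A w)) @^-1` G) ((Y w)%:R)%:E
     = \int[P]_(w in (fun w => (X w, A w)) @^-1` G) (r (X w, A w))%:E)%E.

(* A (possibly randomized) predictor Yhat = Yhat(X,A) in {0,1}, with its
   randomness independent of everything else, is described by its Markov
   kernel p(x,a) = P(Yhat = 1 | X = x, A = a): a measurable map into [0,1].
   More generally a randomized predictor that is a function of some variable
   Z taking values in a measurable space S is a kernel S -> [0,1]. *)
Definition kernel01 (R : realType) (d : measure_display) (S : measurableType d)
  (p : S -> R) : Prop :=
  measurable_fun setT p /\ forall z, 0 <= p z <= 1.

(* Joint distribution (probability mass function on {0,1}^3) of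
   (Y, A, Yhat) where Yhat has kernel p given (X, A):
   P(Y = y, A = a, Yhat = yh) = E[1_{Y=y} 1_{A=a} P(Yhat = yh | X, A)]. *)
Definition joint_dist (R : realType) (d : measure_display)
  (Omega : measurableType d) (P : probability Omega R)
  (d' : measure_display) (T : measurableType d')
  (Y A : Omega -> bool) (X : Omega -> T) (p : T * bool -> R)
  : bool -> bool -> bool -> R :=
  fun y a yh => Rintegral P setT (fun w =>
    (Y w == y)%:R * (A w == a)%:R *
    (if yh then p (X w, A w) else 1 - p (X w, A w))).

(* An oblivious property: a property whose truth depends only on the joint
   distribution of (Y, A, Yhat); i.e. a predicate on such distributions. *)
Definition oblivious_property (R : realType) : Type :=
  (bool -> bool -> bool -> R) -> Prop.

Definition expected_loss (R : realType) (loss : bool -> bool -> R)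
  (jd : bool -> bool -> bool -> R) : R :=
  \sum_(y : bool) \sum_(a : bool) \sum_(yh : bool) loss yh y * jd y a yh.

(* The predictor derived from (R, A) = (r(X,A), A) via kernel q : R * bool -> [0,1]
   has, as a predictor of (X, A), the kernel (x,a) |-> q (r(x,a), a). *)
Definition derived_kernel (R : realType) (d' : measure_display)
  (T : measurableType d') (r : T * bool -> R) (q : R * bool -> R)
  : T * bool -> R :=
  fun z => q (r z, z.2).

(* Main.v *)
Require Import Defs.
From HB Require Import structures.
From mathcomp Require Import all_boot all_order all_algebra.
From mathcomp Require Import all_classical all_reals all_analysis.
From mathcomp Require Import measurable_realfun.
From mathcomp Require Import ring.
Set Implicit Arguments. Unset Strict Implicit. Unset Printing Implicit Defensive.
Import Order.TTheory GRing.Theory Num.Theory.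
Local Open Scope classical_set_scope.
Local Open Scope ring_scope.
Local Open Scope ereal_scope.
Import HBNNSimple.


Section transfer.
Context (R : realType) d (Om : measurableType d) d2 (S : measurableType d2).
Variables (P : {measure set Om -> \bar R}) (pi : Om -> S).
Hypothesis mpi : measurable_fun setT pi.

Lemma transfer (g1 g2 : Om -> R) :
  measurable_fun setT g1 -> measurable_fun setT g2 ->
  (forall w, (0 <= g1 w)%R) -> (forall w, (0 <= g2 w)%R) ->
  (forall G, measurable G -> \int[P]_(w in pi @^-1` G) (g1 w)%:E =
                             \int[P]_(w in pi @^-1` G) (g2 w)%:E) ->
  forall f : S -> R, measurable_fun setT f -> (forall s, (0 <= f s)%R) ->
  \int[P]_w ((f (pi w))%:E * (g1 w)%:E) = \int[P]_w ((f (pi w))%:E * (g2 w)%:E).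
Proof.
move=> mg1 mg2 g10 g20 H f mf f0.
have mf' : measurable_fun setT (EFin \o f) by exact/measurable_EFinP.
pose h := nnsfun_approx measurableT mf'.
have key (g : Om -> R) : measurable_fun setT g -> (forall w, (0 <= g w)%R) ->
    \int[P]_w ((f (pi w))%:E * (g w)%:E) =
    lim (\int[P]_w ((h n (pi w))%:E * (g w)%:E) @[n --> \oo]).
  move=> mg g0.
  have fg w : (f (pi w))%:E * (g w)%:E = lim ((h n (pi w))%:E * (g w)%:E @[n --> \oo]).
    apply/esym/cvg_lim => //; apply: cvgeZr => //.
    by apply: (@cvg_nnsfun_approx _ _ _ _ _ _ mf') => // x _; rewrite lee_fin.
  under eq_integral => w _ do rewrite fg.
  apply: monotone_convergence => //.
  - move=> n; apply: emeasurable_funM; last exact/measurable_EFinP.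
    apply/measurable_EFinP; apply: measurableT_comp => //.
  - by move=> n w _; rewrite mule_ge0// lee_fin.
  - move=> w _ a b ab; rewrite lee_wpmul2r ?lee_fin//.
    exact/lefP/nd_nnsfun_approx.
rewrite (key _ mg1 g10) (key _ mg2 g20); congr (limn _); apply/funext => n.
have ind (g : Om -> R) : measurable_fun setT g -> (forall w, (0 <= g w)%R) ->
  \int[P]_w ((h n (pi w))%:E * (g w)%:E) =
  \sum_(y \in range (h n)) (y%:E * \int[P]_(w in pi @^-1` (h n @^-1` [set y])) (g w)%:E).
  move=> mg g0.
  transitivity (\int[P]_w (\sum_(y \in range (h n))
      ((y * \1_(h n @^-1` [set y]) (pi w))%:E * (g w)%:E))).
    apply: eq_integral => w _.
    rewrite -(@ge0_mule_fsuml _ _ (g w)%:E (fun y => (y * \1_(h n @^-1` [set y]) (pi w))%:E)); last first.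
      by move=> y; rewrite EFinM; exact: nnfun_muleindic_ge0.
    by rewrite fsumEFin // -(fimfunE _ (pi w)).
  rewrite ge0_integral_fsum//; last 2 first.
  - move=> y; apply: emeasurable_funM; last exact/measurable_EFinP.
    apply/measurable_EFinP; apply: measurable_funM => //.
    apply: measurableT_comp => //.
  - by move=> y w _; rewrite mule_ge0 ?lee_fin// -lee_fin EFinM nnfun_muleindic_ge0.
  apply: eq_fsbigr => y yr.
  under eq_integral do rewrite EFinM -muleA.
  rewrite ge0_integralZl//; last 3 first.
  - apply: emeasurable_funM; apply/measurable_EFinP => //.
    apply: measurableT_comp => //.
  - by move=> w _; rewrite mule_ge0 ?lee_fin.
  - by move: yr; rewrite inE => -[t _ <-]; rewrite lee_fin.
  congr (_ * _).
  rewrite -[in RHS](setTI (pi @^-1` _)) integral_mkcondr.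
  apply: eq_integral => w _; rewrite epatch_indic /= muleC.
  by rewrite /indic.
rewrite (ind _ mg1 g10) (ind _ mg2 g20); apply: eq_fsbigr => y _.
by rewrite H//; rewrite -[X in measurable X]setTI; apply: measurable_funP.
Qed.
End transfer.


Section clamp.
Context (R : realType) d (Om : measurableType d).
Variable (P : probability Om R).

Lemma bdd01_integrable (E : set Om) (g : Om -> R) : measurable E ->
  measurable_fun setT g -> (forall w, (0 <= g w <= 1)%R) ->
  P.-integrable E (EFin \o g).
Proof.
move=> mE mg g01; apply: measurable_bounded_integrable => //.
- exact: (le_lt_trans (probability_le1 P mE)) (ltry _).
- exact: measurable_funTS.
- exists 1%R; split => // M M1 x _; have /andP[g0 g1] := g01 x.
  by rewrite /= ger0_norm// (le_trans g1)// ltW.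
Qed.

Lemma pos_null (E : set Om) (f : Om -> R) : measurable E ->
  measurable_fun setT f -> (forall w, E w -> (0 < f w)%R) ->
  \int[P]_(w in E) (f w)%:E = 0 -> P E = 0.
Proof.
move=> mE mf fpos i0.
have : \int[P]_(w in E) `|(f w)%:E| = 0.
  rewrite -i0; apply: eq_integral => w /[!inE] Ew.
  by rewrite gee0_abs// lee_fin ltW// fpos.
move/ae_eq_integral_abs => /(_ mE) [].
  exact/measurable_EFinP/measurable_funTS.
move=> N [mN N0 sub]; apply: (subset_measure0 _ _ _ N0) => //.
move=> w Ew; apply: sub => /= /(_ Ew) /eqP; rewrite eqe.
by rewrite gt_eqF// fpos.
Qed.

Definition clamp01 (x : R) : R := Num.min (Num.max x 0%R) 1%R.

Lemma clamp01_01 x : (0 <= clamp01 x <= 1)%R.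
Proof.
rewrite /clamp01; apply/andP; split.
  by rewrite le_min ler01 le_max lexx orbT.
by rewrite ge_min lexx orbT.
Qed.

Lemma measurable_clamp01 d2 (S : measurableType d2) (k : S -> R) :
  measurable_fun setT k -> measurable_fun setT (fun s => clamp01 (k s)).
Proof.
move=> mk; exact: measurable_minr (measurable_maxr mk (measurable_cst _)) (measurable_cst _).
Qed.

Lemma mset_lt d2 (S : measurableType d2) (f g : S -> R) :
  measurable_fun setT f -> measurable_fun setT g -> measurable [set x | (f x < g x)%R].
Proof.
move=> mf mg.
rewrite (_ : [set x | _] = setT `&` ((fun x => (f x < g x)%R) @^-1` [set true])).
  exact: (measurable_fun_ltr mf mg measurableT (I : measurable [set true])).
by apply/seteqP; split => x /=; [move=> ->|case].
Qed.

Lemma clamp_eq d2 (S : measurableType d2) (pi : Om -> S) (g : Om -> R) (k : S -> R) :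
  measurable_fun setT pi -> measurable_fun setT g -> (forall w, (0 <= g w <= 1)%R) ->
  measurable_fun setT k -> P.-integrable setT (fun w => (k (pi w))%:E) ->
  (forall G, measurable G -> \int[P]_(w in pi @^-1` G) (g w)%:E =
                             \int[P]_(w in pi @^-1` G) (k (pi w))%:E) ->
  forall G, measurable G -> \int[P]_(w in pi @^-1` G) (g w)%:E =
                             \int[P]_(w in pi @^-1` G) (clamp01 (k (pi w)))%:E.
Proof.
move=> mpi mg g01 mk ik H.
have mkpi : measurable_fun setT (fun w => k (pi w)) by exact: measurableT_comp.
have mpre G : measurable G -> measurable (pi @^-1` G).
  by move=> mG; rewrite -[X in measurable X]setTI; exact: mpi.
have G1m : measurable [set s | (1 < k s)%R] by apply: mset_lt.
have G0m : measurable [set s | (k s < 0)%R] by apply: mset_lt.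
have E1 : P (pi @^-1` [set s | (1 < k s)%R]) = 0.
  apply: (@pos_null _ (fun w => k (pi w) - g w)%R) => //.
  - by apply: mpre.
  - exact: measurable_funB.
  - move=> w /= kw; rewrite subr_gt0; have /andP[_ g1] := g01 w.
    exact: le_lt_trans kw.
  - under eq_integral do rewrite EFinB.
    rewrite integralB_EFin//; last 3 first.
    + by apply: mpre.
    + by apply: (integrableS measurableT) => //; apply: mpre.
    + by apply: bdd01_integrable => //; apply: mpre.
    rewrite H// subee//; apply: integrable_fin_num => //; first by apply: mpre.
    by apply: (integrableS measurableT) => //; apply: mpre.
have E0 : P (pi @^-1` [set s | (k s < 0)%R]) = 0.
  apply: (@pos_null _ (fun w => g w - k (pi w))%R) => //.
  - by apply: mpre.
  - exact: measurable_funB.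
  - move=> w /= kw; rewrite subr_gt0; have /andP[g0 _] := g01 w.
    exact: lt_le_trans kw g0.
  - under eq_integral do rewrite EFinB.
    rewrite integralB_EFin//; last 3 first.
    + by apply: mpre.
    + by apply: bdd01_integrable => //; apply: mpre.
    + by apply: (integrableS measurableT) => //; apply: mpre.
    rewrite H// subee//; apply: integrable_fin_num => //; first by apply: mpre.
    by apply: (integrableS measurableT) => //; apply: mpre.
move=> G mG; rewrite H//; apply: ae_eq_integral => //.
- by apply: mpre.
- by apply/measurable_EFinP/measurable_funTS.
- by apply/measurable_EFinP/measurable_funTS; exact: (measurable_clamp01 mkpi).
- exists (pi @^-1` [set s | (1 < k s)%R] `|` pi @^-1` [set s | (k s < 0)%R]); split.
  + by apply: measurableU; apply: mpre.
  + by rewrite measureU0 ?E1//; apply: mpre.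
  + move=> w /= /not_implyP[_ neq].
    have [h|h1] := ltP (1%R : R) (k (pi w)); first by left.
    have [h|h0] := ltP (k (pi w)) (0%R : R); first by right.
    exfalso; apply: neq; congr EFin.
    by rewrite /clamp01 max_l// min_l.
Qed.
End clamp.

Section extra.
Context (R : realType) d (Om : measurableType d).
Variable (P : probability Om R).

Definition flip01 (b : bool) (x : R) : R := if b then x else (1 - x)%R.

Lemma flip01_01 b x : (0 <= x <= 1)%R -> (0 <= flip01 b x <= 1)%R.
Proof.
case: b => //= /andP[x0 x1]; apply/andP; split; first by rewrite subr_ge0.
by rewrite lerBlDr lerDl.
Qed.

Lemma measurable_flip01 d2 (S : measurableType d2) b (F : S -> R) :
  measurable_fun setT F -> measurable_fun setT (fun s => flip01 b (F s)).
Proof.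
by case: b => // mF; apply: measurable_funB => //; exact: measurable_cst.
Qed.

Lemma mbool (g : bool -> R) : measurable_fun setT g.
Proof. by move=> _ B _; exact: I. Qed.

Lemma compl_eq d2 (S : measurableType d2) (pi : Om -> S) (g1 g2 : Om -> R) :
  measurable_fun setT pi ->
  measurable_fun setT g1 -> (forall w, (0 <= g1 w <= 1)%R) ->
  measurable_fun setT g2 -> (forall w, (0 <= g2 w <= 1)%R) ->
  (forall G, measurable G -> \int[P]_(w in pi @^-1` G) (g1 w)%:E =
                             \int[P]_(w in pi @^-1` G) (g2 w)%:E) ->
  forall b G, measurable G ->
    \int[P]_(w in pi @^-1` G) (flip01 b (g1 w))%:E =
    \int[P]_(w in pi @^-1` G) (flip01 b (g2 w))%:E.
Proof.
move=> mpi mg1 g101 mg2 g201 H [] G mG /=; first exact: H.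
have mpre : measurable (pi @^-1` G).
  by rewrite -[X in measurable X]setTI; exact: mpi.
under eq_integral do rewrite EFinB.
under [RHS]eq_integral do rewrite EFinB.
rewrite (@integralB_EFin _ _ _ _ _ (fun=> 1%R))//; last 2 first.
- by apply: bdd01_integrable => // w; rewrite ler01 lexx.
- exact: bdd01_integrable.
rewrite (@integralB_EFin _ _ _ _ _ (fun=> 1%R))//; last 2 first.
- by apply: bdd01_integrable => // w; rewrite ler01 lexx.
- exact: bdd01_integrable.
by rewrite H.
Qed.
End extra.


Section nu_def.
Context (R : realType) d (Om : measurableType d) d2 (S : measurableType d2).
Variables (P : probability Om R) (rho : Om -> S) (f : Om -> R).
Variable (mrho : measurable_fun setT rho).
Variable (mf : measurable_fun setT f).
Variable (f01 : forall w, (0 <= f w <= 1)%R).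

Let mpre G : measurable G -> measurable (rho @^-1` G).
Proof. by move=> mG; rewrite -[X in measurable X]setTI; exact: mrho. Qed.

Definition mu_ (_ : measurable_fun setT rho) : set S -> \bar R := pushforward P rho.
Local Notation mu := (mu_ mrho).

Let mu0 : mu set0 = 0.
Proof. by rewrite /mu_ /pushforward preimage_set0 measure0. Qed.
Let mu_ge0 A : 0 <= mu A.
Proof. exact: measure_ge0. Qed.
Let mu_sa : semi_sigma_additive mu.
Proof.
move=> F mF tF mUF; rewrite /mu_ /pushforward preimage_bigcup.
apply: measure_semi_sigma_additive.
- by move=> n; exact: mpre.
- apply/trivIsetP => /= i j _ _ ij; rewrite -preimage_setI.
  by move/trivIsetP : tF => /(_ _ _ _ _ ij) ->//; rewrite preimage_set0.
- by rewrite -preimage_bigcup; exact: mpre.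
Qed.
HB.instance Definition _ := isMeasure.Build _ _ _ mu mu0 mu_ge0 mu_sa.
Let mu_setT : mu setT = 1.
Proof. by rewrite /mu_ /pushforward preimage_setT probability_setT. Qed.
HB.instance Definition _ := Measure_isProbability.Build _ _ _ mu mu_setT.

Definition nu_ (_ : measurable_fun setT rho) (_ : measurable_fun setT f)
  (_ : forall w, (0 <= f w <= 1)%R) : set S -> \bar R :=
  fun G => \int[P]_(w in rho @^-1` G) (f w)%:E.
Local Notation nu := (nu_ mrho mf f01).

Let f0 w : 0 <= (f w)%:E.
Proof. by rewrite lee_fin; case/andP: (f01 w). Qed.

Let nu0 : nu set0 = 0.
Proof. by rewrite /nu_ preimage_set0 integral_set0. Qed.
Let nu_ge0 A : 0 <= nu A.
Proof. by apply: integral_ge0 => w _. Qed.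
Let nu_sa : semi_sigma_additive nu.
Proof.
move=> F mF tF mUF; rewrite /nu_ preimage_bigcup.
apply: (@semi_sigma_additive_nng_induced _ _ _ P (fun w => (f w)%:E)).
- exact/measurable_EFinP.
- by [].
- by move=> n; exact: mpre.
- apply/trivIsetP => /= i j _ _ ij; rewrite -preimage_setI.
  by move/trivIsetP : tF => /(_ _ _ _ _ ij) ->//; rewrite preimage_set0.
- by rewrite -preimage_bigcup; exact: mpre.
Qed.
HB.instance Definition _ := isMeasure.Build _ _ _ nu nu0 nu_ge0 nu_sa.

Lemma nu_le_mu A : measurable A -> nu A <= mu A.
Proof.
move=> mA; rewrite /nu_ /mu_ /pushforward.
rewrite -[leRHS]mul1e -integral_cst; last exact: mpre.
apply: ge0_le_integral => //.
- exact: mpre.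
- exact/measurable_EFinP/measurable_funTS.
- by move=> w _; rewrite lee_fin; case/andP: (f01 w).
Qed.

Let nu_fin : fin_num_fun nu.
Proof.
move=> A mA; rewrite ge0_fin_numE//.
by rewrite (le_lt_trans (nu_le_mu mA))// (le_lt_trans (probability_le1 _ _))// ?ltry// mpre.
Qed.
HB.instance Definition _ := @Measure_isFinite.Build _ _ _ nu nu_fin.

Lemma nu_dom : nu `<< mu.
Proof.
apply/null_content_dominatesP => A mA muA0.
by apply/eqP; rewrite eq_le nu_ge0 andbT -muA0 nu_le_mu.
Qed.
End nu_def.

Section chain.
Context (R : realType) d (Om : measurableType d) d2 (T2 : measurableType d2)
  d3 (S : measurableType d3).
Variable (P : probability Om R).

Lemma chain (pi : Om -> T2) (rho : Om -> S) (W V Qp Qq : Om -> R)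
  (fa qp qq : T2 -> R) (v' fa' : S -> R) :
  measurable_fun setT pi -> measurable_fun setT rho ->
  measurable_fun setT W -> measurable_fun setT V ->
  measurable_fun setT Qp -> measurable_fun setT Qq ->
  measurable_fun setT fa -> measurable_fun setT qp -> measurable_fun setT qq ->
  measurable_fun setT v' -> measurable_fun setT fa' ->
  (forall w, (0 <= W w)%R) -> (forall w, (0 <= V w)%R) ->
  (forall w, (0 <= Qp w)%R) -> (forall w, (0 <= Qq w)%R) ->
  (forall z, (0 <= fa z)%R) -> (forall z, (0 <= qp z)%R) -> (forall z, (0 <= qq z)%R) ->
  (forall s, (0 <= v' s)%R) -> (forall s, (0 <= fa' s)%R) ->
  (forall w, V w = v' (rho w)) -> (forall w, fa (pi w) = fa' (rho w)) ->
  (forall w, Qp w = qp (pi w)) -> (forall w, Qq w = qq (pi w)) ->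
  (forall G, measurable G -> \int[P]_(w in pi @^-1` G) (W w)%:E =
                             \int[P]_(w in pi @^-1` G) (V w)%:E) ->
  (forall G, measurable G -> \int[P]_(w in rho @^-1` G) (Qp w)%:E =
                             \int[P]_(w in rho @^-1` G) (Qq w)%:E) ->
  \int[P]_w (W w * fa (pi w) * Qp w)%:E = \int[P]_w (W w * fa (pi w) * Qq w)%:E.
Proof.
move=> mpi mrho mW mV mQp mQq mfa mqp mqq mv mfa' W0 V0 Qp0 Qq0 fa0 qp0 qq0 v0 fa'0
  eV efa eQp eQq HW HQ.
transitivity (\int[P]_w ((fa (pi w) * qp (pi w))%R%:E * (W w)%:E)).
  by apply: eq_integral => w _; rewrite -EFinM eQp; congr EFin; ring.
rewrite (@transfer _ _ _ _ _ P pi mpi W V mW mV W0 V0 HW (fun z => fa z * qp z)%R); last 2 first.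
- exact: measurable_funM.
- by move=> z; rewrite mulr_ge0.
transitivity (\int[P]_w ((v' (rho w) * fa' (rho w))%R%:E * (Qp w)%:E)).
  by apply: eq_integral => w _; rewrite -!EFinM eQp eV efa; congr EFin; ring.
rewrite (@transfer _ _ _ _ _ P rho mrho Qp Qq mQp mQq Qp0 Qq0 HQ (fun s => v' s * fa' s)%R); last 2 first.
- exact: measurable_funM.
- by move=> z; rewrite mulr_ge0.
transitivity (\int[P]_w ((fa (pi w) * qq (pi w))%R%:E * (V w)%:E)).
  by apply: eq_integral => w _; rewrite -!EFinM eQq eV efa; congr EFin; ring.
rewrite -(@transfer _ _ _ _ _ P pi mpi W V mW mV W0 V0 HW (fun z => fa z * qq z)%R); last 2 first.
- exact: measurable_funM.
- by move=> z; rewrite mulr_ge0.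
by apply: eq_integral => w _; rewrite -EFinM eQq; congr EFin; ring.
Qed.
End chain.

Local Close Scope ereal_scope.
Unset Implicit Arguments.

Theorem proposition5p2 (R : realType) (d : measure_display)
  (Omega : measurableType d) (P : probability Omega R)
  (d' : measure_display) (T : measurableType d')
  (Y A : Omega -> bool) (X : Omega -> T)
  (mY : measurable_fun setT Y) (mA : measurable_fun setT A)
  (mX : measurable_fun setT X)
  (r : T * bool -> R) (hr : is_bayes_regressor P Y A X r)
  (loss : bool -> bool -> R) (C : oblivious_property R)
  (hopt : exists p0 : T * bool -> R,
      kernel01 p0 /\ C (joint_dist P Y A X p0) /\
      forall p : T * bool -> R, kernel01 p -> C (joint_dist P Y A X p) ->
        expected_loss loss (joint_dist P Y A X p0)
        <= expected_loss loss (joint_dist P Y A X p)) :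
  exists q : R * bool -> R,
    kernel01 q /\
    C (joint_dist P Y A X (derived_kernel r q)) /\
    forall p : T * bool -> R, kernel01 p -> C (joint_dist P Y A X p) ->
      expected_loss loss (joint_dist P Y A X (derived_kernel r q))
      <= expected_loss loss (joint_dist P Y A X p).
Proof.
case: hopt => p0 [[mp0 p001] [Cp0 optp0]].
case: hr => mr [ir hbay].
pose pi := fun w => (X w, A w).
have mpi : measurable_fun setT pi by exact: measurable_fun_pair.
pose r' := fun z => clamp01 (r z).
have mr' : measurable_fun setT r' := measurable_clamp01 mr.
have r'01 z : (0 <= r' z <= 1)%R by exact: clamp01_01.
pose rho := fun w => (r' (pi w), A w).
have mrho : measurable_fun setT rho.
  by apply: measurable_fun_pair => //; exact: measurableT_comp.
pose f := fun w => p0 (pi w).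
have mf : measurable_fun setT f by exact: measurableT_comp.
have f01 w : (0 <= f w <= 1)%R by exact: p001.
have [h [h0 hfin hint hnu]] := @radon_nikodym_sigma_finite _ _ _
  (mu_ P mrho) (nu_ P mrho mf f01) (@nu_dom _ _ _ _ _ P _ _ mrho mf f01).
pose k := fun s => fine (h s).
have mh : measurable_fun setT h := measurable_int _ hint.
have mk : measurable_fun setT k.
  exact: measurableT_comp (fine_measurable measurableT) mh.
have hk s : h s = (k s)%:E by rewrite /k fineK.
have k0 s : (0 <= k s)%R by rewrite -lee_fin -hk.
have pushk G : measurable G ->
    (\int[mu_ P mrho]_(s in G) h s = \int[P]_(w in rho @^-1` G) (k (rho w))%:E)%E.
  move=> mG; under eq_integral do rewrite hk.
  apply: (ge0_integral_pushforward mrho P mG).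
  - by apply/measurable_EFinP/measurable_funTS.
  - by move=> s _; rewrite lee_fin.
have ik : P.-integrable setT (fun w => (k (rho w))%:E).
  apply/integrableP; split.
    by apply/measurable_EFinP; exact: measurableT_comp.
  have := (integrableP _ _ _ hint).2.
  under eq_integral do rewrite hk.
  rewrite (ge0_integral_pushforward mrho P measurableT); last 2 first.
  - by apply/measurable_EFinP/measurableT_comp.
  - by move=> s _; rewrite abse_ge0.
  by rewrite preimage_setT.
have Hrho G : measurable G -> (\int[P]_(w in rho @^-1` G) (f w)%:E =
    \int[P]_(w in rho @^-1` G) (k (rho w))%:E)%E.
  by move=> mG; rewrite -pushk// -hnu.
pose q' := fun s => clamp01 (k s).
have Hq := clamp_eq (P := P) mrho mf f01 mk ik Hrho.
have mq' : measurable_fun setT q' := measurable_clamp01 mk.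
have q'01 s : (0 <= q' s <= 1)%R by exact: clamp01_01.
pose q := fun t : R * bool => q' (clamp01 t.1, t.2).
have mq : measurable_fun setT q.
  apply: measurableT_comp mq' _; apply: measurable_fun_pair => //.
  exact: (measurable_clamp01 measurable_fst).
have kq : kernel01 q by split => // t; exact: q'01.
have mYR : measurable_fun setT (fun w => ((Y w)%:R : R)).
  exact: measurableT_comp (mbool (fun b : bool => (b%:R : R))) mY.
have Y01 w : (0 <= ((Y w)%:R : R) <= 1)%R by case: (Y w); rewrite /= ?lexx ?ler01.
have HY := clamp_eq (P := P) mpi mYR Y01 mr ir hbay.
have mr'pi : measurable_fun setT (fun w => r' (pi w)) by exact: measurableT_comp.
have HW y G : measurable G -> (\int[P]_(w in pi @^-1` G) ((Y w == y)%:R)%:E =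
    \int[P]_(w in pi @^-1` G) (flip01 y (r' (pi w)))%:E)%E.
  move=> mG; rewrite -(compl_eq (P := P) mpi mYR Y01 mr'pi (fun w => r'01 (pi w)) HY y mG).
  by apply: eq_integral => w _; case: y; case: (Y w); rewrite /flip01 ?subrr ?subr0.
have mq'rho : measurable_fun setT (fun w => q' (rho w)) by exact: measurableT_comp.
have HQ yh := compl_eq (P := P) mrho mf f01 mq'rho (fun w => q'01 (rho w)) Hq yh.
have Ejd : joint_dist P Y A X (derived_kernel r q) = joint_dist P Y A X p0.
  apply/funext => y; apply/funext => a; apply/funext => yh.
  rewrite /joint_dist /Rintegral; congr fine; symmetry.
  apply: (@chain _ _ _ _ _ _ _ P pi rho (fun w => (Y w == y)%:R)
    (fun w => flip01 y (r' (pi w))) (fun w => flip01 yh (f w))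
    (fun w => flip01 yh (q' (rho w))) (fun z => (z.2 == a)%:R)
    (fun z => flip01 yh (p0 z)) (fun z => flip01 yh (q' (r' z, z.2)))
    (fun s => flip01 y (clamp01 s.1)) (fun s => (s.2 == a)%:R)).
  - exact: mpi.
  - exact: mrho.
  - exact: measurableT_comp (mbool (fun b => (b == y)%:R)) mY.
  - exact: measurable_flip01 mr'pi.
  - exact: measurable_flip01 mf.
  - exact: measurable_flip01 mq'rho.
  - exact: measurableT_comp (mbool (fun b => (b == a)%:R)) measurable_snd.
  - exact: measurable_flip01 mp0.
  - apply: measurable_flip01; apply: measurableT_comp mq' _.
    exact: measurable_fun_pair mr' measurable_snd.
  - exact: measurable_flip01 (measurable_clamp01 measurable_fst).
  - exact: measurableT_comp (mbool (fun b => (b == a)%:R)) measurable_snd.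
  - by move=> w; rewrite ler0n.
  - by move=> w; case/andP: (flip01_01 y (r'01 (pi w))).
  - by move=> w; case/andP: (flip01_01 yh (f01 w)).
  - by move=> w; case/andP: (flip01_01 yh (q'01 (rho w))).
  - by move=> z; rewrite ler0n.
  - by move=> z; case/andP: (flip01_01 yh (p001 z)).
  - by move=> z; case/andP: (flip01_01 yh (q'01 (r' z, z.2))).
  - by move=> s; case/andP: (flip01_01 y (clamp01_01 s.1)).
  - by move=> s; rewrite ler0n.
  - move=> w /=; congr flip01.
    by rewrite /clamp01 /r' max_l ?min_l; case/andP: (clamp01_01 (r (pi w))).
  - by [].
  - by [].
  - by [].
  - exact: HW.
  - exact: HQ.
exists q; split => //; rewrite Ejd; split => //.
Qed.
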